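(* For any positive integers $r,h,w,p$ there exists a positive integer $s=s(r,h,w,p)$ such that the following holds. Let $G$ be a graph with no subgraph isomorphic to $K_{r,r}$. For each $i\in[p]$ let $\mathcal C_i$ be a collection of pairwise disjoint subsets of $V(G)$, each of size at most $h$, with $|\mathcal C_i|\ge s$. Then for each $i\in[p]$ there exists $\mathcal C_i'\subseteq\mathcal C_i$ with $|\mathcal C_i'|=w$ such that for all $1\le i_1<i_2\le p$, every member of $\mathcal C_{i_1}'$ is disjoint from, and has no edge of $G$ to, every member of $\mathcal C_{i_2}'$.
   Context: Graphs are finite and simple; $[p]=\{1,\dots,p\}$. *)

(* Defs.v *)
From mathcomp Require Import all_boot.
Set Implicit Arguments. Unset Strict Implicit. Unset Printing Implicit Defensive.

Definition simple_graph (T : finType) (e : rel T) : Prop :=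
  symmetric e /\ irreflexive e.

Definition has_Krr (T : finType) (e : rel T) (r : nat) : Prop :=
  exists A B : {set T},
    [/\ #|A| = r, #|B| = r, [disjoint A & B] &
        forall x y, x \in A -> y \in B -> e x y].

Definition disjoint_family_le (T : finType) (h : nat) (C : {set {set T}}) : Prop :=
  (forall X, X \in C -> #|X| <= h) /\
  (forall X Y, X \in C -> Y \in C -> X != Y -> [disjoint X & Y]).

Definition separated (T : finType) (e : rel T) (X Y : {set T}) : Prop :=
  [disjoint X & Y] /\ (forall x y, x \in X -> y \in Y -> ~~ e x y).

(* Main.v *)
Require Import Defs.
From mathcomp Require Import all_boot zify.
Set Implicit Arguments. Unset Strict Implicit. Unset Printing Implicit Defensive.


Lemma ex_subset (U : finType) (A : {set U}) k :
  k <= #|A| -> exists B : {set U}, B \subset A /\ #|B| = k.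
Proof.
elim: k => [|k IH] hk; first by exists set0; rewrite sub0set cards0.
have [B [sBA cB]] := IH (ltnW hk).
have : 0 < #|A :\: B| by rewrite cardsDS // cB subn_gt0.
rewrite card_gt0 => /set0Pn [x]; rewrite inE => /andP [xB xA].
exists (x |: B); split; first by rewrite subUset sub1set xA sBA.
by rewrite cardsU1 xB cB.
Qed.

Lemma pig (U V : finType) (Q : {set U}) (Vs : {set V}) (f : U -> V) n :
  {in Q, forall y, f y \in Vs} -> #|Vs| * n < #|Q| ->
  exists v, n < #|[set y in Q | f y == v]|.
Proof.
move=> hf hc; case: (boolP [exists v, n < #|[set y in Q | f y == v]|]) => [/existsP //|].
rewrite negb_exists => /forallP hall.
have : #|Q| <= #|Vs| * n; last by rewrite leqNgt hc.
rewrite -sum1_card (partition_big f (mem Vs)) /=; last by move=> i /hf.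
rewrite -sum_nat_const leq_sum // => v _.
have := hall v; rewrite -leqNgt => h; apply: leq_trans h.
by rewrite -sum1_card; apply: eq_leq; apply: eq_bigl => y; rewrite inE.
Qed.

Lemma BR a : exists N, forall (U : finType) (P Q : {set U}) (R : rel U),
  N <= #|P| -> N <= #|Q| -> exists A B : {set U},
  [/\ A \subset P, B \subset Q, a <= #|A|, a <= #|B| &
   (forall x y, x \in A -> y \in B -> R x y) \/
   (forall x y, x \in A -> y \in B -> ~~ R x y)].
Proof.
exists (2 * a + 2 ^ (2 * a) * a) => U P Q R hP hQ.
case: (posnP a) => [->|apos].
  by exists set0, set0; split; rewrite ?sub0set //; left => x y; rewrite inE.
have [P0 [sP0 cP0]] := ex_subset (leq_trans (leq_addr _ _) hP : 2 * a <= #|P|).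
pose f y := [set x in P0 | R x y].
have hf : {in Q, forall y, f y \in powerset P0}.
  by move=> y _; rewrite inE; apply/subsetP => x; rewrite inE => /andP [].
have hc : #|powerset P0| * a.-1 < #|Q|.
  rewrite card_powerset cP0; apply: leq_trans hQ.
  move: (2 ^ (2 * a)) => M; rewrite mulnC; case: a apos {hP cP0 hf} => // a' _ /=; nia.
have [S hS] := pig hf hc.
have haF : a <= #|[set y in Q | f y == S]| by move: hS; case: (a) apos.
have : 0 < #|[set y in Q | f y == S]| by apply: leq_trans haF.
rewrite card_gt0 => /set0Pn [y0]; rewrite inE => /andP [_ /eqP fy0].
have sS : S \subset P0 by rewrite -fy0; apply/subsetP => x; rewrite inE => /andP [].
have hsum : #|S| + #|P0 :\: S| = 2 * a by rewrite cardsDS // -cP0 subnKC // subset_leq_card.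
case: (leqP a #|S|) => haS.
  exists S, [set y in Q | f y == S]; split => //.
  - exact: subset_trans sS sP0.
  - by apply/subsetP => y; rewrite inE => /andP [].
  left => x y xS; rewrite inE => /andP [_ /eqP fy].
  by move: xS; rewrite -fy inE; case/andP.
exists (P0 :\: S), [set y in Q | f y == S]; split => //.
- exact: subset_trans (subsetDl _ _) sP0.
- by apply/subsetP => y; rewrite inE => /andP [].
- lia.
right => x y /setDP [xP0 xS] /setIdP [_ /eqP fy].
by apply: contra xS => Rxy; rewrite -fy inE xP0.
Qed.

Lemma VL (T : finType) (e : rel T) r (XA YB : {set T}) :
  irreflexive e -> 2 * r <= #|XA| -> 2 * r <= #|YB| ->
  (forall x y, x \in XA -> y \in YB -> (x == y) || e x y) -> has_Krr e r.
Proof.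
move=> irr hX hY hxy.
have hr : r <= #|XA| by lia.
have [A [sA cA]] := ex_subset hr.
have hD : r <= #|YB :\: A|.
  rewrite cardsD; have := subset_leq_card (subsetIr YB A); lia.
have [B [sB cB]] := ex_subset hD.
exists A, B; split => //.
  rewrite disjoint_sym disjoint_subset; apply: subset_trans sB _.
  by apply/subsetP => y; rewrite !inE => /andP [].
move=> x y xA yB; move/subsetP: sB => /(_ y yB) /setDP [yYB yA].
have := hxy x y (subsetP sA x xA) yYB; case: eqP => [exy|//].
by move: yA; rewrite -exy xA.
Qed.

Definition pdisj (T : finType) (C : {set {set T}}) :=
  forall X Y, X \in C -> Y \in C -> X != Y -> [disjoint X & Y].

Definition conf (T : finType) (e : rel T) (c : nat * nat) (X Y : {set T}) : bool :=
  [exists x, [exists y, [&& x \in X, y \in Y, index x (enum X) == c.1,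
     index y (enum Y) == c.2 & (x == y) || e x y]]].

Lemma conf_nth (T : finType) (e : rel T) c X Y x0 : conf e c X Y ->
  [/\ nth x0 (enum X) c.1 \in X, nth x0 (enum Y) c.2 \in Y &
     (nth x0 (enum X) c.1 == nth x0 (enum Y) c.2) || e (nth x0 (enum X) c.1) (nth x0 (enum Y) c.2)].
Proof.
case/existsP => x /existsP [y /and5P [xX yY /eqP ix /eqP iy hxy]].
rewrite -ix -iy !nth_index ?mem_enum //.
Qed.

Lemma EX (T : finType) (e : rel T) r c (A B : {set {set T}}) :
  irreflexive e -> 0 < r -> pdisj A -> pdisj B ->
  2 * r <= #|A| -> 2 * r <= #|B| ->
  (forall X Y, X \in A -> Y \in B -> conf e c X Y) -> has_Krr e r.
Proof.
move=> irr rpos dA dB hA hB hc.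
have : 0 < #|A| by lia.
rewrite card_gt0 => /set0Pn [X0 X0A].
have : 0 < #|B| by lia.
rewrite card_gt0 => /set0Pn [Y0 Y0B].
have := hc _ _ X0A Y0B; case/existsP => x0 _.
pose g (X : {set T}) := nth x0 (enum X) c.1.
pose g' (Y : {set T}) := nth x0 (enum Y) c.2.
have gA : forall X, X \in A -> g X \in X.
  by move=> X XA; have [] := conf_nth x0 (hc _ _ XA Y0B).
have gB : forall Y, Y \in B -> g' Y \in Y.
  by move=> Y YB; have [] := conf_nth x0 (hc _ _ X0A YB).
apply: (@VL _ e r (g @: A) (g' @: B) irr).
- rewrite card_in_imset // => X X' XA X'A gX.
  apply/eqP; apply/negPn/negP => nX.
  have := disjointFr (dA _ _ XA X'A nX) (gA _ XA).
  by rewrite gX gA.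
- rewrite card_in_imset // => X X' XA X'A gX.
  apply/eqP; apply/negPn/negP => nX.
  have := disjointFr (dB _ _ XA X'A nX) (gB _ XA).
  by rewrite gX gB.
move=> x y /imsetP [X XA ->] /imsetP [Y YB ->].
by have [] := conf_nth x0 (hc _ _ XA YB).
Qed.

Lemma pdisjS (T : finType) (A B : {set {set T}}) : A \subset B -> pdisj B -> pdisj A.
Proof. by move=> sAB dB X Y XA YA; apply: dB; apply: (subsetP sAB). Qed.

Lemma TFcs r (cs : seq (nat * nat)) m : 0 < r -> exists f, m <= f /\
  forall (T : finType) (e : rel T), irreflexive e -> ~ has_Krr e r ->
  forall A B : {set {set T}}, pdisj A -> pdisj B -> f <= #|A| -> f <= #|B| ->
  exists A' B' : {set {set T}}, [/\ A' \subset A, B' \subset B, m <= #|A'|, m <= #|B'| &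
    forall c X Y, c \in cs -> X \in A' -> Y \in B' -> ~~ conf e c X Y].
Proof.
move=> rpos; elim: cs => [|c cs [f' [hmf' IH]]].
  exists m; split => // T e _ _ A B _ _ hA hB; exists A, B; split => //.
have [N HN] := BR (maxn f' (2 * r)).
exists (maxn N f'); split; first by apply: leq_trans hmf' (leq_maxr _ _).
move=> T e irr nK A B dA dB hA hB.
have [A1 [B1 [sA1 sB1 cA1 cB1 [hall|hnone]]]] :=
  HN _ A B (conf e c) (leq_trans (leq_maxl _ _) hA) (leq_trans (leq_maxl _ _) hB).
  exfalso; apply: nK; apply: (EX irr rpos (pdisjS sA1 dA) (pdisjS sB1 dB)) hall.
  - exact: leq_trans (leq_maxr _ _) cA1.
  - exact: leq_trans (leq_maxr _ _) cB1.
have [A' [B' [sA' sB' cA' cB' hsep]]] := IH T e irr nK A1 B1 (pdisjS sA1 dA) (pdisjS sB1 dB)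
  (leq_trans (leq_maxl _ _) cA1) (leq_trans (leq_maxl _ _) cB1).
exists A', B'; split => //; first exact: subset_trans sA' sA1.
  exact: subset_trans sB' sB1.
move=> c' X Y; rewrite inE => /orP [/eqP -> XA YB|]; last exact: hsep.
by apply: hnone; [apply: (subsetP sA') | apply: (subsetP sB')].
Qed.

Definition cols h := [seq (i, j) | i <- iota 0 h, j <- iota 0 h].

Lemma conf_of (T : finType) (e : rel T) h (X Y : {set T}) x y :
  #|X| <= h -> #|Y| <= h -> x \in X -> y \in Y -> (x == y) || e x y ->
  exists2 c, c \in cols h & conf e c X Y.
Proof.
move=> hX hY xX yY hxy; exists (index x (enum X), index y (enum Y)).
  apply: allpairs_f; rewrite mem_iota /= add0n.
    by apply: leq_trans hX; rewrite cardE index_mem mem_enum.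
  by apply: leq_trans hY; rewrite cardE index_mem mem_enum.
apply/existsP; exists x; apply/existsP; exists y; by rewrite xX yY !eqxx.
Qed.

Lemma nosep (T : finType) (e : rel T) h (X Y : {set T}) :
  #|X| <= h -> #|Y| <= h -> (forall c, c \in cols h -> ~~ conf e c X Y) ->
  separated e X Y.
Proof.
move=> hX hY hn; split.
  rewrite disjoint_subset; apply/subsetP => x xX; rewrite inE; apply/negP => xY.
  have [c hc hcf] := conf_of (e:=e) hX hY xX xY (introT orP (or_introl (eqxx x))).
  by move: (hn c hc); rewrite hcf.
move=> x y xX yY; apply/negP => exy.
have [c hc hcf] := conf_of (e:=e) hX hY xX yY (introT orP (or_intror exy)).
by move: (hn c hc); rewrite hcf.
Qed.

Lemma TF r h m : 0 < r -> exists f, m <= f /\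
  forall (T : finType) (e : rel T), irreflexive e -> ~ has_Krr e r ->
  forall A B : {set {set T}}, disjoint_family_le h A -> disjoint_family_le h B ->
  f <= #|A| -> f <= #|B| ->
  exists A' B' : {set {set T}}, [/\ A' \subset A, B' \subset B, m <= #|A'|, m <= #|B'| &
    forall X Y, X \in A' -> Y \in B' -> separated e X Y].
Proof.
move=> rpos; have [f [hmf Hf]] := TFcs (cols h) m rpos.
exists f; split => // T e irr nK A B [hA dA] [hB dB] cA cB.
have [A' [B' [sA sB cA' cB' hs]]] := Hf T e irr nK A B dA dB cA cB.
exists A', B'; split => // X Y XA YB; apply: nosep.
- by apply: hA; apply: (subsetP sA).
- by apply: hB; apply: (subsetP sB).
by move=> c hc; apply: hs.
Qed.

Lemma dflS (T : finType) h (A B : {set {set T}}) :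
  A \subset B -> disjoint_family_le h B -> disjoint_family_le h A.
Proof.
move=> sAB [hB dB]; split; first by move=> X XA; apply: hB; apply: (subsetP sAB).
exact: pdisjS sAB dB.
Qed.

Lemma MAIN r h w p (L : seq ('I_p * 'I_p)) : 0 < r -> exists g, w <= g /\
  forall (T : finType) (e : rel T), irreflexive e -> ~ has_Krr e r ->
  forall C : 'I_p -> {set {set T}},
  (forall i, disjoint_family_le h (C i)) -> (forall i, g <= #|C i|) ->
  exists C' : 'I_p -> {set {set T}},
    (forall i, C' i \subset C i /\ w <= #|C' i|) /\
    (forall ij, ij \in L -> ij.1 != ij.2 ->
       forall X Y, X \in C' ij.1 -> Y \in C' ij.2 -> separated e X Y).
Proof.
move=> rpos; elim: L => [|[i1 i2] L [g' [hwg' IH]]].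
  exists w; split => // T e _ _ C _ hC; exists C; split => // i; split => //.
case: (eqVneq i1 i2) => [<-|ne12].
  exists g'; split => // T e irr nK C hF hC.
  have [C' [h1 h2]] := IH T e irr nK C hF hC; exists C'; split => //.
  move=> ij; rewrite inE => /orP [/eqP -> /=|]; first by rewrite eqxx.
  exact: h2.
have [f [hgf Hf]] := TF h g' rpos.
exists f; split; first exact: leq_trans hwg' hgf.
move=> T e irr nK C hF hC.
have [A [B [sA sB cA cB hAB]]] := Hf T e irr nK (C i1) (C i2) (hF i1) (hF i2) (hC i1) (hC i2).
pose D i := if i == i1 then A else if i == i2 then B else C i.
have sD : forall i, D i \subset C i.
  by move=> i; rewrite /D; case: eqP => [->//|_]; case: eqP => [->//|_].
have cD : forall i, g' <= #|D i|.
  move=> i; rewrite /D; case: eqP => // _; case: eqP => // _.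
  exact: leq_trans hgf (hC i).
have [C' [h1 h2]] := IH T e irr nK D (fun i => dflS (sD i) (hF i)) cD.
exists C'; split.
  by move=> i; have [s1 s2] := h1 i; split => //; exact: subset_trans s1 (sD i).
move=> ij; rewrite inE => /orP [/eqP -> /= _ X Y XC YC|]; last exact: h2.
apply: hAB.
  by have [s1 _] := h1 i1; move: (subsetP s1 X XC); rewrite /D eqxx.
have [s1 _] := h1 i2; move: (subsetP s1 Y YC); rewrite /D eq_sym (negbTE ne12).
by rewrite eqxx.
Qed.

Theorem mainTheorem10 :
  forall r h w p : nat, 0 < r -> 0 < h -> 0 < w -> 0 < p ->
  exists s : nat, 0 < s /\
    forall (T : finType) (e : rel T), simple_graph e -> ~ has_Krr e r ->
    forall C : 'I_p -> {set {set T}},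
      (forall i, disjoint_family_le h (C i)) ->
      (forall i, s <= #|C i|) ->
      exists C' : 'I_p -> {set {set T}},
        (forall i, C' i \subset C i /\ #|C' i| = w) /\
        (forall i1 i2 : 'I_p, (i1 < i2)%N ->
           forall X Y, X \in C' i1 -> Y \in C' i2 -> separated e X Y).
Proof.
move=> r h w p rpos hpos wpos ppos.
have [g [hwg Hg]] := MAIN h w (enum (predT : pred ('I_p * 'I_p))) rpos.
exists g; split; first exact: leq_trans wpos hwg.
move=> T e [_ irr] nK C hF hC.
have [C' [h1 h2]] := Hg T e irr nK C hF hC.
pose C'' i := odflt set0 [pick D : {set {set T}} | (D \subset C' i) && (#|D| == w)].
have hC'' : forall i, C'' i \subset C' i /\ #|C'' i| = w.
  move=> i; rewrite /C''; case: pickP => [D /andP [s1 /eqP c1] //|hn].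
  have [s2 c2] := h1 i; have [D [s3 c3]] := ex_subset c2.
  by move: (hn D); rewrite s3 c3 eqxx.
exists C''; split.
  move=> i; have [s1 c1] := hC'' i; split => //.
  by have [s2 _] := h1 i; exact: subset_trans s1 s2.
move=> i1 i2 hlt X Y XC YC.
apply: (h2 (i1, i2)); rewrite ?mem_enum //=.
  by apply/eqP => E; move: hlt; rewrite E ltnn.
- by have [s1 _] := hC'' i1; exact: (subsetP s1).
by have [s1 _] := hC'' i2; exact: (subsetP s1).
Qed.
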